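(* ODH is population monotonic. Fix a strict priority order on $\mathcal C$ used to break all ties in ODH. Let $\sigma=\langle\mathcal V,\mathcal C,S,B\rangle$ be an approval-based multi-winner election and let $\emptyset\neq\mathcal G\subseteq\mathrm{ODH}(\sigma)$. 1. Let $\mathcal A\subseteq\mathcal C$ satisfy $\mathcal G\cap\mathcal A=\emptyset$ and $B(\mathcal A)\ge1$. Let $\sigma_1=\langle\mathcal V_1,\mathcal C,S,B_1\rangle$ be given by: $|\mathcal V_1|=|\mathcal V|$, $B_1(\mathcal A)=B(\mathcal A)-1$, $B_1(\mathcal A\cup\mathcal G)=B(\mathcal A\cup\mathcal G)+1$, and $B_1(\mathcal X)=B(\mathcal X)$ for all other $\mathcal X\subseteq\mathcal C$. Then $\mathcal G\cap\mathrm{ODH}(\sigma_1)\neq\emptyset$. 2. Let $\sigma_2=\langle\mathcal V_2,\mathcal C,S,B_2\rangle$ be given by: $|\mathcal V_2|=|\mathcal V|+1$, $B_2(\mathcal G)=B(\mathcal G)+1$, and $B_2(\mathcal X)=B(\mathcal X)$ for all $\mathcal X\neq\mathcal G$. Then $\mathcal G\cap\mathrm{ODH}(\sigma_2)\neq\emptyset$.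
   Context: An approval-based multi-winner election is a tuple $\sigma=\langle \mathcal V,\mathcal C,S,B\rangle$, where $\mathcal V$ is a finite set of agents, $\mathcal C$ is a finite set of candidates, $1\le S\le|\mathcal C|$ is an integer, and $B:2^{\mathcal C}\to\mathbb N$ gives, for each $\mathcal A\subseteq\mathcal C$, the number $B(\mathcal A)$ of agents whose ballot is exactly $\mathcal A$ (with $\sum_{\mathcal A}B(\mathcal A)\le|\mathcal V|$). For a non-empty $\mathcal A\subseteq\mathcal C$, the family $\mathfrak F_{\sigma,\mathcal A}$ is the set of all $F:2^{\mathcal C}\times\mathcal A\to\mathbb R$ such that: - $F(y,c)\ge0$ for all $y$ and $c$; - $F(y,c)=0$ if $c\notin y$; - $\sum_{c\in\mathcal A\cap y}F(y,c)=B(y)$ whenever $y\cap\mathcal A\neq\emptyset$. We write $\mathrm{Supp}_F(c)=\sum_yF(y,c)$ and $\mathrm{maxMin}(\sigma,\mathcal A)=\sup_{F\in\mathfrak F_{\sigma,\mathcal A}}\min_{c\in\mathcal A}\mathrm{Supp}_F(c)$. We also write $\mathfrak F^{\mathrm{opt}}_{\sigma,\mathcal A}=\{F\in\mathfrak F_{\sigma,\mathcal A}:\mathrm{Supp}_F(c)\ge\mathrm{maxMin}(\sigma,\mathcal A)\ \forall c\in\mathcal A\}$. The Open D'Hondt (ODH) rule proceeds as follows. Start with $\mathcal C_e=\emptyset$ and repeat $S$ times: - for each $c\in\mathcal C\setminus\mathcal C_e$, choose any $F\in\mathfrak F^{\mathrm{opt}}_{\sigma,\mathcal C_e\cup\{c\}}$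 and set $s_c=\mathrm{Supp}_F(c)$ (this value equals $\mathrm{maxMin}(\sigma,\mathcal C_e\cup\{c\})$); - then add to $\mathcal C_e$ a candidate $w\in\mathcal C\setminus\mathcal C_e$ with maximal $s_w$, breaking ties by the fixed priority order. The output $\mathcal C_e$ is denoted $\mathrm{ODH}(\sigma)$. *)

(* Defs.v *)
From Stdlib Require Import Reals ClassicalEpsilon.
From mathcomp Require Import all_boot.
Set Implicit Arguments. Unset Strict Implicit. Unset Printing Implicit Defensive.

Section ODH.
Variable C : finType.

(* An approval-based multi-winner election <V, C, S, B>: the set of agents is
   represented by its size nV, ballots are counted by B. *)
Record election := Election {
  nV : nat;
  seats : nat;
  ballots : {set C} -> nat
}.

Definition wf_election (s : election) : Prop :=
  (1 <= seats s)%N /\ (seats s <= #|C|)%N /\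
  (\sum_(X : {set C}) ballots s X <= nV s)%N.

(* The family F_{sigma,A} (F given as a total function; only values at
   candidates in A matter). *)
Definition in_family (s : election) (A : {set C}) (F : {set C} -> C -> R) : Prop :=
  (forall (y : {set C}) c, c \in A -> Rle 0 (F y c)) /\
  (forall (y : {set C}) c, c \in A -> c \notin y -> F y c = R0) /\
  (forall y : {set C}, A :&: y != set0 ->
     \big[Rplus/R0]_(c in A :&: y) F y c = INR (ballots s y)).

Definition Supp (F : {set C} -> C -> R) (c : C) : R :=
  \big[Rplus/R0]_(y : {set C}) F y c.

Definition is_min_on (f : C -> R) (A : {set C}) (v : R) : Prop :=
  (exists c, c \in A /\ v = f c) /\ (forall c, c \in A -> Rle v (f c)).

Definition minSupps (s : election) (A : {set C}) : R -> Prop :=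
  fun v => exists F, in_family s A F /\ is_min_on (Supp F) A v.

Definition maxMin (s : election) (A : {set C}) : R :=
  epsilon (inhabits R0) (fun v => is_lub (minSupps s A) v).

Definition Rleb (x y : R) : bool := if Rle_dec x y then true else false.
Definition Reqb (x y : R) : bool := if Req_EM_T x y then true else false.

(* One ODH round: score s_c = maxMin(sigma, Ce ∪ {c}); pick a remaining
   candidate with maximal score, ties broken by priority [prio]
   (smaller prio value = higher priority). *)
Definition odh_score (s : election) (Ce : {set C}) (c : C) : R :=
  maxMin s (c |: Ce).

Definition odh_step (prio : C -> nat) (s : election) (Ce : {set C}) : {set C} :=
  match [pick w | (w \notin Ce) &&
           [forall c, (c \notin Ce) ==>
              (Rleb (odh_score s Ce c) (odh_score s Ce w) &&
               (Reqb (odh_score s Ce c) (odh_score s Ce w) ==> (prio w <= prio c)%N))]]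
  with
  | Some w => w |: Ce
  | None => Ce
  end.

Definition ODH (prio : C -> nat) (s : election) : {set C} :=
  iter (seats s) (odh_step prio s) set0.

Definition move_ballot (s : election) (A G : {set C}) : election :=
  Election (nV s) (seats s)
    (fun X => if X == A then (ballots s A - 1)%N
              else if X == A :|: G then (ballots s X + 1)%N
              else ballots s X).

Definition add_ballot (s : election) (G : {set C}) : election :=
  Election (nV s).+1 (seats s)
    (fun X => if X == G then (ballots s G + 1)%N else ballots s X).

End ODH.

(* Main.v *)
Require Import Defs.
From Stdlib Require Import Reals ClassicalEpsilon Lra.
From HB Require Import structures.
From mathcomp Require Import all_boot.
Set Implicit Arguments. Unset Strict Implicit. Unset Printing Implicit Defensive.

Lemma Rplus_assoc' : associative Rplus. Proof. move=> *; lra. Qed.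
HB.instance Definition _ := Monoid.isComLaw.Build R R0 Rplus Rplus_assoc' Rplus_comm Rplus_0_l.

Local Open Scope R_scope.
Section Sums.
Variable I : finType.

Lemma Rsum_le (P : pred I) (F1 F2 : I -> R) :
  (forall i, P i -> Rle (F1 i) (F2 i)) ->
  Rle (\big[Rplus/R0]_(i | P i) F1 i) (\big[Rplus/R0]_(i | P i) F2 i).
Proof.
move=> H; apply: (big_ind2 (fun x y => Rle x y)); first lra.
- move=> ? ? ? ? ? ?; lra.
- exact: H.
Qed.

Lemma Rsum_ge0 (P : pred I) (F : I -> R) :
  (forall i, P i -> Rle 0 (F i)) -> Rle 0 (\big[Rplus/R0]_(i | P i) F i).
Proof.
move=> H; apply: (big_ind (fun x => Rle 0 x)); first lra.
- move=> ? ? ? ?; lra.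
- exact: H.
Qed.

Lemma Rsum_mulr (P : pred I) (F : I -> R) k :
  \big[Rplus/R0]_(i | P i) (F i * k) = (\big[Rplus/R0]_(i | P i) F i) * k.
Proof.
apply: (big_rec2 (fun x y => x = y * k)); first lra.
move=> i y1 y2 _ ->; lra.
Qed.

Lemma Rsum_term (P : pred I) (F : I -> R) j :
  (forall i, P i -> Rle 0 (F i)) -> P j -> Rle (F j) (\big[Rplus/R0]_(i | P i) F i).
Proof.
move=> H Pj; rewrite (bigD1 j) //=.
have := Rsum_ge0 (P := fun i => P i && (i != j)) (F := F).
move=> /(_ _)-H2; have : Rle 0 (\big[Rplus/R0]_(i | P i && (i != j)) F i).
  by apply: H2 => i /andP[]; auto.
lra.
Qed.
End Sums.
Section MM.
Variable C : finType.
Implicit Types (s : election C) (X : {set C}).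

Lemma exists_min_seq (l : seq C) (g : C -> R) : l != [::] ->
  exists c, c \in l /\ forall c', c' \in l -> g c <= g c'.
Proof.
elim: l => [//|x l IH] _.
case: (l =P [::]) => [->|/eqP Hl].
  by exists x; split; [rewrite inE eqxx | move=> c'; rewrite inE => /eqP ->; lra].
have [w [Hw Hall]] := IH Hl.
case: (Rle_dec (g x) (g w)) => Hxw.
- exists x; split; first by rewrite inE eqxx.
  move=> c'; rewrite inE => /orP[/eqP ->|Hc]; first lra.
  have := Hall _ Hc; lra.
- exists w; split; first by rewrite inE Hw orbT.
  move=> c'; rewrite inE => /orP[/eqP ->|Hc]; first lra.
  exact: Hall.
Qed.

Lemma exists_min X (g : C -> R) : X != set0 ->
  exists c, c \in X /\ forall c', c' \in X -> g c <= g c'.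
Proof.
move=> HX.
have Hl : enum X != [::].
  apply/eqP => He; move: HX; case/set0Pn => x Hx.
  by have := mem_enum X x; rewrite He Hx.
have [c [Hc H]] := exists_min_seq g Hl.
exists c; split; first by rewrite -mem_enum.
by move=> c' Hc'; apply: H; rewrite mem_enum.
Qed.

Definition F0 s X (y : {set C}) (c : C) : R :=
  match [pick x in X :&: y] with
  | Some d => if c == d then INR (ballots s y) else 0
  | None => 0 end.

Lemma F0_family s X : in_family s X (F0 s X).
Proof.
rewrite /F0; split; [|split].
- move=> y c _; case: pickP => [d _|_]; last lra.
  case: eqP => _; [exact: pos_INR | lra].
- move=> y c _ Hc; case: pickP => [d|//].
  rewrite inE => /andP[_ Hd]; case: eqP => // E; by move: Hc; rewrite E Hd.
- move=> y Hy; case: pickP => [d Hd|Hn].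
  + rewrite (bigD1 d) //= eqxx big1 ?Rplus_0_r //.
    by move=> i /andP[_ /negbTE ->].
  + by case/set0Pn: Hy => x Hx; move: (Hn x); rewrite Hx.
Qed.

Lemma family_le s X F y c : in_family s X F -> c \in X ->
  F y c <= INR (ballots s y).
Proof.
move=> [H1 [H2 H3]] Hc.
case Hcy: (c \in y); last by rewrite H2 ?Hcy //; apply: pos_INR.
have Hne : X :&: y != set0 by apply/set0Pn; exists c; rewrite inE Hc Hcy.
rewrite -(H3 _ Hne).
apply: (Rsum_term (P := fun i => i \in X :&: y)).
  by move=> i; rewrite inE => /andP[Hi _]; apply: H1.
by rewrite inE Hc Hcy.
Qed.

Lemma maxMin_lub s X : X != set0 -> is_lub (minSupps s X) (maxMin s X).
Proof.
move=> HX; rewrite /maxMin; apply: epsilon_spec.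
have Hb : bound (minSupps s X).
  exists (\big[Rplus/R0]_(y : {set C}) INR (ballots s y)).
  move=> v [F [HF [[c0 [Hc0 ->]] _]]].
  rewrite /Supp; apply: Rsum_le => y _; exact: family_le HF Hc0.
have Hne : exists v, minSupps s X v.
  have [c [Hc Hm]] := exists_min (Supp (F0 s X)) HX.
  exists (Supp (F0 s X) c), (F0 s X); split; first exact: F0_family.
  split; first by exists c. exact: Hm.
have [m Hm] := completeness _ Hb Hne.
by exists m.
Qed.

Lemma maxMin_cmp s s' X : X != set0 ->
  (forall F, in_family s X F -> exists F', in_family s' X F' /\
     forall c, c \in X -> Supp F c <= Supp F' c) ->
  maxMin s X <= maxMin s' X.
Proof.
move=> HX H.
have [_ Hl] := maxMin_lub s HX.
apply: Hl => v [F [HF [[c0 [Hc0 ->]] Hmin]]].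
have [F' [HF' HS]] := H F HF.
have [c1 [Hc1 Hm1]] := exists_min (Supp F') HX.
have [Hu _] := maxMin_lub s' HX.
have Hv : minSupps s' X (Supp F' c1).
  by exists F'; split => //; split; [exists c1 | ].
have := Hu _ Hv; have := HS _ Hc1; have := Hmin _ Hc1; lra.
Qed.

Lemma sumX s X F y : in_family s X F ->
  \big[Rplus/R0]_(c in X :&: y) F y c = \big[Rplus/R0]_(c in X) F y c.
Proof.
move=> [_ [H2 _]].
rewrite (bigID (fun c => c \in y) (fun c => c \in X)) /=.
rewrite [X in _ = _ + X]big1 ?Rplus_0_r; last by move=> c /andP[Hc Hy]; apply: H2.
by apply: eq_bigl => c; rewrite inE.
Qed.

Definition Fscale s s' X (F : {set C} -> C -> R) y c : R :=
  if ballots s y == 0%N then F0 s' X y c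
  else F y c * (INR (ballots s' y) / INR (ballots s y)).

Lemma M1 s s' X : X != set0 ->
  (forall y, X :&: y != set0 -> (ballots s y <= ballots s' y)%N) ->
  maxMin s X <= maxMin s' X.
Proof.
move=> HX Hle; apply: maxMin_cmp => // F HF.
have [H1 [H2 H3]] := HF.
have [G1 [G2 G3]] := F0_family s' X.
exists (Fscale s s' X F); split; [split; [|split]|].
- move=> y c Hc; rewrite /Fscale; case: eqP => E; first exact: G1.
  apply: Rmult_le_pos; first exact: H1.
  apply: Rmult_le_pos; [exact: pos_INR | apply: Rlt_le; apply: Rinv_0_lt_compat].
  apply: lt_0_INR; apply/ltP; rewrite lt0n; exact/eqP.
- move=> y c Hc Hy; rewrite /Fscale; case: eqP => E; first exact: G2.
  by rewrite H2 // Rmult_0_l.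
- move=> y Hy; rewrite /Fscale; case: eqP => E.
    by apply: G3.
  rewrite Rsum_mulr H3 //.
  have : INR (ballots s y) <> 0 by apply: not_0_INR; exact: E.
  move=> ?; field; auto.
- move=> c Hc; rewrite /Supp; apply: Rsum_le => y _; rewrite /Fscale.
  case: eqP => E.
  + case Hcy: (c \in y); last by rewrite H2 ?Hcy //; exact: G1.
    have Hne : X :&: y != set0 by apply/set0Pn; exists c; rewrite inE Hc Hcy.
    have := family_le y HF Hc; rewrite E /= => ?.
    have := G1 y c Hc; have := H1 y c Hc; lra.
  + case Hcy: (c \in y); last by rewrite H2 ?Hcy // Rmult_0_l; lra.
    have Hne : X :&: y != set0 by apply/set0Pn; exists c; rewrite inE Hc Hcy.
    have Hpos : 0 < INR (ballots s y) by apply: lt_0_INR; apply/ltP; rewrite lt0n; exact/eqP.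
    have Hr : 1 <= INR (ballots s' y) / INR (ballots s y).
      apply: (Rmult_le_reg_r (INR (ballots s y))) => //.
      rewrite Rmult_1_l /Rdiv Rmult_assoc Rinv_l ?Rmult_1_r; last lra.
      by apply: le_INR; apply/leP; apply: Hle.
    have := H1 y c Hc => H0.
    have := Rmult_le_compat_l _ _ _ H0 Hr; lra.
Qed.

Definition Ftr s s' (a b : {set C}) (F : {set C} -> C -> R) y c : R :=
  if y == a then F a c * (INR (ballots s' a) / INR (ballots s a))
  else if y == b then F b c + F a c / INR (ballots s a)
  else F y c.

Lemma M2 s s' X a b : a != b -> (0 < ballots s a)%N ->
  (ballots s' a).+1 = ballots s a -> ballots s' b = (ballots s b).+1 ->
  (forall y, y != a -> y != b -> ballots s' y = ballots s y) ->
  (forall c, c \in X -> c \in a -> c \in b) -> X :&: a != set0 ->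
  maxMin s X <= maxMin s' X.
Proof.
move=> Hab Ha0 Ea Eb Eo Hsub Hna.
have HX : X != set0.
  by apply/set0Pn; case/set0Pn: Hna => x; rewrite inE => /andP[Hx _]; exists x.
have Hpos : 0 < INR (ballots s a) by apply: lt_0_INR; apply/ltP.
have Eai : INR (ballots s' a) + 1 = INR (ballots s a) by rewrite -Ea S_INR.
apply: maxMin_cmp => // F HF.
have [H1 [H2 H3]] := HF.
have Hsa : \big[Rplus/R0]_(c in X) F a c = INR (ballots s a).
  by rewrite -(sumX a HF) H3.
have Hsb : \big[Rplus/R0]_(c in X :&: b) F a c = INR (ballots s a).
  rewrite -Hsa (bigID (fun c => c \in b) (fun c => c \in X)) /=.
  rewrite [X in _ + X]big1 ?Rplus_0_r.
    by apply: eq_bigl => c; rewrite inE.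
  move=> c /andP[Hc Hb]; apply: H2 => //; apply/negP => Hca.
  by move: Hb; rewrite (Hsub c Hc Hca).
exists (Ftr s s' a b F); split; [split; [|split]|].
- move=> y c Hc; rewrite /Ftr; case: eqP => _.
    apply: Rmult_le_pos; first exact: H1.
    apply: Rmult_le_pos; [exact: pos_INR | apply: Rlt_le; apply: Rinv_0_lt_compat; lra].
  case: eqP => _; last exact: H1.
  have := H1 b c Hc; have := H1 a c Hc => ? ?.
  have : 0 <= F a c / INR (ballots s a).
    apply: Rmult_le_pos => //; apply: Rlt_le; apply: Rinv_0_lt_compat; lra.
  lra.
- move=> y c Hc Hy; rewrite /Ftr; case: eqP => [E|_].
    by rewrite H2 ?Rmult_0_l // -E.
  case: eqP => [E|_]; last exact: H2.
  subst y; rewrite (H2 b c) // (H2 a c) //; first by unfold Rdiv; ring.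
  apply/negP => Hca; by move: Hy; rewrite (Hsub c Hc Hca).
- move=> y Hy; rewrite /Ftr; case: eqP => [E|/eqP Hya].
    subst y; rewrite Rsum_mulr H3 //.
    field; lra.
  case: eqP => [E|/eqP Hyb].
    subst y; rewrite big_split /= H3 //.
    have -> : \big[Rplus/R0]_(i in X :&: b) (F a i / INR (ballots s a)) =
              (\big[Rplus/R0]_(i in X :&: b) F a i) / INR (ballots s a)
      by rewrite /Rdiv Rsum_mulr.
    rewrite Hsb Eb S_INR; field; lra.
  by rewrite H3 // Eo.
- move=> c Hc; rewrite /Supp.
  have Ed : forall g : {set C} -> R, \big[Rplus/R0]_y g y =
      g a + g b + \big[Rplus/R0]_(y | (y != a) && (y != b)) g y.
    move=> g; rewrite (bigD1 a) //= (bigD1 b) /=; last by rewrite eq_sym.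
    by rewrite Rplus_assoc.
  rewrite !Ed /Ftr eqxx (negbTE (_ : b != a)) ?eqxx; last by rewrite eq_sym.
  apply: Rplus_le_compat; last first.
    apply: Req_le; apply: eq_bigr => y /andP[/negbTE -> /negbTE ->] //.
  have -> : INR (ballots s' a) = INR (ballots s a) - 1 by lra.
  have : F a c * ((INR (ballots s a) - 1) / INR (ballots s a)) + F a c / INR (ballots s a) = F a c by field; lra.
  lra.
Qed.
End MM.

Section Greedy.
Variable C : finType.
Variable prio : C -> nat.
Hypothesis prio_inj : injective prio.

Lemma exists_best_seq (l : seq C) (g : C -> R) : l != [::] ->
  exists w, w \in l /\ forall c, c \in l ->
    g c <= g w /\ (g c = g w -> (prio w <= prio c)%N).
Proof.
elim: l => [//|x l IH] _.
case: (l =P [::]) => [->|/eqP Hl].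
  exists x; split; first by rewrite inE eqxx.
  by move=> c; rewrite inE => /eqP ->; split; [lra|].
have [w [Hw Hall]] := IH Hl.
case: (Rtotal_order (g x) (g w)) => [Hlt|[Heq|Hgt]].
- exists w; split; first by rewrite inE Hw orbT.
  move=> c; rewrite inE => /orP[/eqP ->|Hc]; last exact: Hall.
  split; [lra | move=> E; lra].
- case: (leqP (prio x) (prio w)) => Hp.
  + exists x; split; first by rewrite inE eqxx.
    move=> c; rewrite inE => /orP[/eqP ->|Hc]; first by split; [lra|].
    have [H1 H2] := Hall c Hc; split; first lra.
    move=> E; apply: leq_trans Hp _; apply: H2; lra.
  + exists w; split; first by rewrite inE Hw orbT.
    move=> c; rewrite inE => /orP[/eqP ->|Hc]; last exact: Hall.
    by split; [lra | move=> _; apply: ltnW].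
- exists x; split; first by rewrite inE eqxx.
  move=> c; rewrite inE => /orP[/eqP ->|Hc]; first by split; [lra|].
  have [H1 H2] := Hall c Hc; split; first lra.
  move=> E; lra.
Qed.

Lemma Rleb_P x y : Rleb x y = true <-> x <= y.
Proof. by rewrite /Rleb; case: Rle_dec. Qed.

Lemma Reqb_P x y : Reqb x y = true <-> x = y.
Proof. by rewrite /Reqb; case: Req_EM_T. Qed.

Definition best (s : election C) (Ce : {set C}) (w : C) :=
  w \notin Ce /\ forall c, c \notin Ce ->
    odh_score s Ce c <= odh_score s Ce w /\
    (odh_score s Ce c = odh_score s Ce w -> (prio w <= prio c)%N).

Lemma step_some (s : election C) (Ce : {set C}) c0 : c0 \notin Ce ->
  exists w, odh_step prio s Ce = w |: Ce /\ best s Ce w.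
Proof.
move=> Hc0; rewrite /odh_step; case: pickP => [w /andP[Hw /forallP Hall]|Hn].
  exists w; split => //; split => // c Hc.
  move: (Hall c); rewrite Hc /= => /andP[/Rleb_P H1 /implyP H2]; split => // E.
  by apply: H2; apply/Reqb_P.
exfalso.
set l := enum [set c | c \notin Ce].
have Hl : l != [::].
  apply/eqP => He; have := mem_enum [set c | c \notin Ce] c0.
  by rewrite -/l He inE Hc0.
have [w [Hw Hall]] := exists_best_seq (odh_score s Ce) Hl.
move: (Hn w); rewrite mem_enum inE in Hw; rewrite Hw /=.
move/negP; apply; apply/forallP => c; apply/implyP => Hc.
have Hcl : c \in l by rewrite mem_enum inE.
have [H1 H2] := Hall c Hcl.
apply/andP; split; first exact/Rleb_P.
by apply/implyP => /Reqb_P; apply: H2.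
Qed.

Lemma step_none (s : election C) (Ce : {set C}) : (forall c, c \in Ce) -> odh_step prio s Ce = Ce.
Proof.
move=> H; rewrite /odh_step; case: pickP => [w /andP[Hw _]|//].
by rewrite H in Hw.
Qed.

Lemma step_sub (s : election C) (Ce : {set C}) : Ce \subset odh_step prio s Ce.
Proof.
rewrite /odh_step; case: pickP => [w _|_]; last exact: subxx.
exact: subsetUr.
Qed.

Lemma greedy (s s' : election C) (G : {set C}) :
  (forall X, X != set0 -> X :&: G = set0 -> maxMin s' X = maxMin s X) ->
  (forall X, X != set0 -> maxMin s X <= maxMin s' X) ->
  forall n, G :&: iter n (odh_step prio s') set0 = set0 ->
    iter n (odh_step prio s') set0 = iter n (odh_step prio s) set0.
Proof.
move=> Heq Hle; elim=> [//|n IH]; rewrite !iterS => HG.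
have Hsub := step_sub s' (iter n (odh_step prio s') set0).
have HG' : G :&: iter n (odh_step prio s') set0 = set0.
  apply/eqP; rewrite -subset0; apply: subset_trans (setIS G Hsub) _; rewrite HG; exact: subxx.
rewrite -IH // in HG *.
set Ce := iter n (odh_step prio s') set0 in HG *.
case: (pickP (fun c => c \notin Ce)) => [c0 Hc0|Hn]; last first.
  rewrite !step_none // => c; by move: (Hn c) => /negbFE.
have [w' [E' [Hw' B']]] := step_some s' Hc0.
have [w [E [Hw B]]] := step_some s Hc0.
rewrite E' E in HG *.
have Hw'G : w' \notin G.
  apply/negP => Hin; have : w' \in G :&: (w' |: Ce) by rewrite !inE eqxx Hin.
  by rewrite HG inE.
have Hne : forall c, c |: Ce != set0.
  by move=> c; apply/set0Pn; exists c; rewrite !inE eqxx.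
have Hs1 : odh_score s' Ce w' = odh_score s Ce w'.
  apply: Heq => //; apply/eqP; rewrite setIC HG //.
have Hs2 : odh_score s Ce w <= odh_score s' Ce w by apply: Hle.
have [Ba1 Ba2] := B w' Hw'.
have [Bb1 Bb2] := B' w Hw.
have Eq1 : odh_score s Ce w' = odh_score s Ce w by lra.
have Eq2 : odh_score s' Ce w = odh_score s' Ce w' by lra.
have P1 := Ba2 Eq1; have P2 := Bb2 Eq2.
have : prio w = prio w' by apply/eqP; rewrite eqn_leq P1 P2.
by move/prio_inj => ->.
Qed.
End Greedy.

Lemma meetP (C : finType) (X y : {set C}) :
  reflect (exists c, c \in X /\ c \in y) (X :&: y != set0).
Proof.
case: (set0Pn (X :&: y)) => [H|H]; constructor.
  by case: H => c; rewrite inE => /andP[H1 H2]; exists c.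
by case=> c [H1 H2]; apply: H; exists c; rewrite inE H1 H2.
Qed.

Theorem theorem6 (C : finType) (prio : C -> nat) (prio_inj : injective prio)
  (s : election C) (Hwf : wf_election s)
  (G : {set C}) (HG0 : G != set0) (HGsub : G \subset ODH prio s) :
  (forall A : {set C}, G :&: A = set0 -> (1 <= ballots s A)%N ->
     G :&: ODH prio (move_ballot s A G) != set0)
  /\
  G :&: ODH prio (add_ballot s G) != set0.
Proof.
have Final : forall s' : election C, seats s' = seats s ->
  (forall X, X != set0 -> X :&: G = set0 -> maxMin s' X = maxMin s X) ->
  (forall X, X != set0 -> maxMin s X <= maxMin s' X) ->
  G :&: ODH prio s' != set0.
  move=> s' Hseats Heq Hle; apply/negP => /eqP H.
  have := greedy prio_inj Heq Hle H.
  rewrite /ODH in H *; rewrite Hseats => E.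
  move: H; rewrite Hseats E; rewrite -/(ODH prio s).
  by move/setIidPl: HGsub => ->; apply/eqP.
have [g Hg] := set0Pn _ HG0.
split.
- move=> A HGA HA1.
  set s1 := move_ballot s A G.
  have HAG : A != A :|: G.
    apply/eqP => E; have : g \in A :&: G by rewrite inE Hg andbT E inE Hg orbT.
    by rewrite setIC HGA inE.
  have B1A : ballots s1 A = (ballots s A - 1)%N by rewrite /s1 /= eqxx.
  have B1AG : ballots s1 (A :|: G) = (ballots s (A :|: G)).+1.
    by rewrite /s1 /= eq_sym (negbTE HAG) eqxx addn1.
  have B1o : forall y, y != A -> y != A :|: G -> ballots s1 y = ballots s y.
    by move=> y H1 H2; rewrite /s1 /= (negbTE H1) (negbTE H2).
  have Hfw : forall X, X :&: A != set0 -> maxMin s X <= maxMin s1 X.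
    move=> X HXA; apply: (M2 (a := A) (b := A :|: G)) => //.
    + by rewrite B1A; case: (ballots s A) HA1 => //= n _; rewrite subn1.
    + by move=> c _ Hc; rewrite inE Hc.
  have Hle : forall X, X != set0 -> maxMin s X <= maxMin s1 X.
    move=> X HX; case: (boolP (X :&: A != set0)) => [HXA|]; first exact: Hfw.
    move/negPn/eqP => HXA; apply: M1 => // y /meetP[c [Hc Hy]].
    have Hya : y != A.
      apply/eqP => E; have : c \in X :&: A by rewrite inE Hc -E Hy.
      by rewrite HXA inE.
    case: (eqVneq y (A :|: G)) => [->|Hyg]; first by rewrite B1AG.
    by rewrite B1o.
  apply: Final => // X HX HXG; apply: Rle_antisym; last exact: Hle.
  case: (boolP (X :&: A != set0)) => [HXA|].
  + apply: (M2 (a := A :|: G) (b := A)) => //.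
    * by rewrite eq_sym.
    * by rewrite B1AG.
    * by rewrite B1A; case: (ballots s A) HA1 => //= n _; rewrite subn1.
    * by move=> y H1 H2; rewrite B1o.
    * move=> c Hc; rewrite inE => /orP[//|HcG].
      have : c \in X :&: G by rewrite inE Hc HcG.
      by rewrite HXG inE.
    * case/meetP: HXA => c [H1 H2]; apply/meetP; exists c; by rewrite inE H2.
  + move/negPn/eqP => HXA; apply: M1 => // y /meetP[c [Hc Hy]].
    have Hya : y != A.
      apply/eqP => E; have : c \in X :&: A by rewrite inE Hc -E Hy.
      by rewrite HXA inE.
    have Hyg : y != A :|: G.
      apply/eqP => E; move: Hy; rewrite E inE => /orP[Hy|Hy].
        have : c \in X :&: A by rewrite inE Hc Hy.
        by rewrite HXA inE.
      have : c \in X :&: G by rewrite inE Hc Hy.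
      by rewrite HXG inE.
    by rewrite B1o.
- set s2 := add_ballot s G.
  apply: Final => //.
    move=> X HX HXG; apply: Rle_antisym; last first.
      apply: M1 => // y _; rewrite /s2 /=; case: eqP => [->|//]; exact: leq_addr.
    apply: M1 => // y /meetP[c [Hc Hy]]; rewrite /s2 /=; case: eqP => // E.
    have : c \in X :&: G by rewrite inE Hc -E Hy.
    by rewrite HXG inE.
  move=> X HX; apply: M1 => // y _; rewrite /s2 /=; case: eqP => [->|//].
  exact: leq_addr.
Qed.
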